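(* For an integer $k\ge 2$, let $G_k$ be the graph obtained from $k$ vertex-disjoint paths $a_jb_jc_jd_je_jf_j$ ($j\in[k]$) of order $6$ and two further new vertices $x,y$ by adding the edges $xa_j$ and $yf_j$ for all $j\in[k]$. Then $G_k\in\mathcal U$ for every $k\ge 2$. (Note $G_k$ has girth $14$ and minimum degree $2$.)
   Context: All graphs are finite and simple. A set $P\subseteq V(G)$ is an open packing if no two distinct vertices of $P$ have a common neighbor; it is maximal if maximal under inclusion among open packings. $\rho^o(G)$ is the maximum size of an open packing and $\rho^o_L(G)$ the minimum size of a maximal open packing; $\mathcal U$ is the class of graphs with $\rho^o_L(G)=\rho^o(G)$. $[k]=\{1,\dots,k\}$. *)

(* Defs.v *)
From mathcomp Require Import all_boot.
Set Implicit Arguments. Unset Strict Implicit. Unset Printing Implicit Defensive.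

Definition simple_graph (T : finType) (e : rel T) : Prop :=
  irreflexive e /\ symmetric e.

Definition onbhd (T : finType) (e : rel T) (v : T) : {set T} := [set u | e v u].

Definition open_packing (T : finType) (e : rel T) (P : {set T}) : bool :=
  [forall u in P, forall v in P, (u != v) ==> [disjoint onbhd e u & onbhd e v]].

Definition maximal_open_packing (T : finType) (e : rel T) (P : {set T}) : bool :=
  open_packing e P &&
  [forall Q : {set T}, (P \proper Q) ==> ~~ open_packing e Q].

Definition rho_o (T : finType) (e : rel T) : nat :=
  \max_(P : {set T} | open_packing e P) #|P|.

(* rho^o_L(G): minimum size of a maximal open packing
   (maximal open packings always exist, since set0 is an open packing). *)
Definition rho_oL (T : finType) (e : rel T) : nat :=
  \big[minn/#|T|]_(P : {set T} | maximal_open_packing e P) #|P|.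

Definition in_U (T : finType) (e : rel T) : Prop := rho_oL e = rho_o e.

(* The graph G_k.  Vertices: inl (j, i) is the i-th vertex (i = 0..5 for
   a,b,c,d,e,f) of the j-th path; inr false = x, inr true = y. *)
Definition Gk_vertex (k : nat) : finType := (('I_k * 'I_6) + bool)%type.

Definition Gk_edge (k : nat) : rel (Gk_vertex k) :=
  fun u v =>
    match u, v with
    | inl (j1, i1), inl (j2, i2) =>
        (j1 == j2) && ((i1.+1 == i2 :> nat) || (i2.+1 == i1 :> nat))
    | inl (_, i), inr b | inr b, inl (_, i) =>
        if b then i == 5 :> nat else i == 0 :> nat
    | inr _, inr _ => false
    end.

(* Main.v *)
Require Import Defs.
From mathcomp Require Import all_boot.
From Stdlib Require Import Classical.
From mathcomp Require Import zify.
Set Implicit Arguments. Unset Strict Implicit. Unset Printing Implicit Defensive.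
Section S.
Variable k : nat.
Local Notation T := (Gk_vertex k).
Local Notation e := (@Gk_edge k).
Definition o0 : 'I_6 := @Ordinal 6 0 isT.
Definition o1 : 'I_6 := @Ordinal 6 1 isT.
Definition o2 : 'I_6 := @Ordinal 6 2 isT.
Definition o3 : 'I_6 := @Ordinal 6 3 isT.
Definition o4 : 'I_6 := @Ordinal 6 4 isT.
Definition o5 : 'I_6 := @Ordinal 6 5 isT.
Lemma oE0 (H : 0 < 6) : Ordinal H = o0. Proof. exact: val_inj. Qed.
Lemma oE1 (H : 1 < 6) : Ordinal H = o1. Proof. exact: val_inj. Qed.
Lemma oE2 (H : 2 < 6) : Ordinal H = o2. Proof. exact: val_inj. Qed.
Lemma oE3 (H : 3 < 6) : Ordinal H = o3. Proof. exact: val_inj. Qed.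
Lemma oE4 (H : 4 < 6) : Ordinal H = o4. Proof. exact: val_inj. Qed.
Lemma oE5 (H : 5 < 6) : Ordinal H = o5. Proof. exact: val_inj. Qed.
Definition vt (j : 'I_k) (i : 'I_6) : T := inl (j, i).
Definition vx : T := inr false.
Definition vy : T := inr true.

Ltac nbt := case=> [[? [[|[|[|[|[|[|?]]]]]] ?]]|[]] //=;
  rewrite ?oE0 ?oE1 ?oE2 ?oE3 ?oE4 ?oE5 ?andbT ?andbF //;
  try (move/eqP=> <-); rewrite /vt /vx /vy; eauto.

Lemma nbx z : e vx z -> exists j, z = vt j o0. Proof. move: z; nbt. Qed.
Lemma nby z : e vy z -> exists j, z = vt j o5. Proof. move: z; nbt. Qed.
Lemma nb0 j z : e (vt j o0) z -> z = vx \/ z = vt j o1. Proof. move: z; nbt. Qed.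
Lemma nb1 j z : e (vt j o1) z -> z = vt j o0 \/ z = vt j o2. Proof. move: z; nbt. Qed.
Lemma nb2 j z : e (vt j o2) z -> z = vt j o1 \/ z = vt j o3. Proof. move: z; nbt. Qed.
Lemma nb3 j z : e (vt j o3) z -> z = vt j o2 \/ z = vt j o4. Proof. move: z; nbt. Qed.
Lemma nb4 j z : e (vt j o4) z -> z = vt j o3 \/ z = vt j o5. Proof. move: z; nbt. Qed.
Lemma nb5 j z : e (vt j o5) z -> z = vt j o4 \/ z = vy. Proof. move: z; nbt. Qed.

Lemma esym u v : e u v = e v u.
Proof.
case: u => [[j i]|b]; case: v => [[j' i']|b'] //=.
by rewrite eq_sym orbC.
Qed.

Lemma share (P : {set T}) u v z : open_packing e P -> u \in P -> v \in P ->
  e z u -> e z v -> u = v.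
Proof.
move=> /forallP/(_ u)/implyP HP Hu Hv Hzu Hzv.
move: (HP Hu) => /forallP/(_ v)/implyP/(_ Hv).
case: (u =P v) => [//|_] /= Hd.
have H1 : z \in onbhd e u by rewrite inE esym.
have := disjointFr Hd H1; by rewrite inE esym Hzv.
Qed.

Lemma opI (Q : {set T}) :
  (forall u v z, u \in Q -> v \in Q -> e z u -> e z v -> u = v) -> open_packing e Q.
Proof.
move=> H; apply/forallP=> u; apply/implyP=> Hu; apply/forallP=> v.
apply/implyP=> Hv; apply/implyP=> Huv.
rewrite disjoint_subset; apply/subsetP => z; rewrite !inE => Hz.
apply/negP => Hz2; move/eqP: Huv; apply; apply: (H u v z) => //; by rewrite esym.
Qed.

Lemma maxl (P : {set T}) w : maximal_open_packing e P -> w \notin P ->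
  exists u z, [/\ u \in P, u != w, e w z & e z u].
Proof.
move=> /andP [HP /forallP Hmax] Hw.
apply: NNPP => Hno.
have: open_packing e (w |: P).
  apply: opI => u v z; rewrite !inE => /predU1P [->|Hu] /predU1P [->|Hv] Hzu Hzv //.
  - apply/eqP; apply/negPn/negP => Hne; apply: Hno; exists v, z; split => //.
      by rewrite eq_sym. by rewrite esym.
  - apply/eqP; apply/negPn/negP => Hne; apply: Hno; exists u, z; split => //.
      by rewrite esym.
  - exact: share HP Hu Hv Hzu Hzv.
move/implyP: (Hmax (w |: P)) => H; apply/negP; apply: H.
by apply: properUr; rewrite sub1set.
Qed.
Definition tag6 (t : T) : nat := match t with inl p => nat_of_ord p.2 | inr b => 6 + b end.

Lemma shareT (P : {set T}) u v z : open_packing e P -> u \in P -> v \in P ->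
  e z u -> e z v -> tag6 u != tag6 v -> False.
Proof. by move=> HP Hu Hv Hzu Hzv; rewrite (share HP Hu Hv Hzu Hzv) eqxx. Qed.

Ltac eok := (try rewrite /vt); (try rewrite /vx); (try rewrite /vy); rewrite /= ?eqxx ?orbT //.
Ltac sh HP Hu Hv Z := solve [apply: (share (z:=Z) HP Hu Hv); eok].
Ltac shF HP H1 H2 Z := solve [exfalso; apply: (shareT (z:=Z) HP H1 H2); eok].
Ltac zs t j := first [t (vt j o0)|t (vt j o1)|t (vt j o2)|t (vt j o3)|t (vt j o4)|t (vt j o5)|t vx|t vy].
Ltac finish HP Hu Hv Hx Hy j := first [ done
 | solve [zs ltac:(fun Z => sh HP Hu Hv Z) j]
 | solve [zs ltac:(fun Z => shF HP Hu Hx Z) j]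
 | solve [zs ltac:(fun Z => shF HP Hv Hx Z) j]
 | solve [zs ltac:(fun Z => shF HP Hu Hy Z) j]
 | solve [zs ltac:(fun Z => shF HP Hv Hy Z) j]
 | solve [exfalso; move: Hx Hy; rewrite ?Hu ?Hv //] ].

Definition phi (P : {set T}) (v : T) : option 'I_k + option 'I_k :=
  match v with
  | inr false => inl None
  | inr true => inr None
  | inl (j, i) => if odd i then (if (i == 5 :> nat) && (vx \notin P) then inl None else inl (Some j))
                  else (if (i == 0 :> nat) && (vy \notin P) then inr None else inr (Some j))
  end.

Lemma phi_inj P : open_packing e P -> {in P &, injective (phi P)}.
Proof.
move=> HP u v.
case: u => [[j [[|[|[|[|[|[|?]]]]]] ?]]|[]] //=;
case: v => [[j' [[|[|[|[|[|[|?]]]]]] ?]]|[]] //=;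
  rewrite ?oE0 ?oE1 ?oE2 ?oE3 ?oE4 ?oE5;
case: (boolP (vx \in P)) => Hx; case: (boolP (vy \in P)) => Hy //= Hu Hv; try by [].
all: try (case=> Hjj; subst).
all: try move=> _.
all: first [finish HP Hu Hv Hx Hy j | finish HP Hu Hv Hx Hy j'].
Qed.

Lemma factA P j : maximal_open_packing e P -> vx \in P -> vt j o3 \notin P -> vt j o5 \in P.
Proof.
move=> HM Hx Hd; have HP := (andP HM).1.
case: (maxl HM Hd) => u [z [Hu Hne Hz Hzu]].
case: (nb3 Hz) => Ez; subst z.
- case: (nb2 Hzu) => Eu; subst u; last by rewrite eqxx in Hne.
  by shF HP Hu Hx (vt j o0).
- by case: (nb4 Hzu) => Eu; subst u; first rewrite eqxx in Hne.
Qed.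

Lemma factB P j : maximal_open_packing e P -> vx \notin P -> vt j o1 \notin P -> vt j o3 \in P.
Proof.
move=> HM Hx Hd; have HP := (andP HM).1.
case: (maxl HM Hd) => u [z [Hu Hne Hz Hzu]].
case: (nb1 Hz) => Ez; subst z.
- case: (nb0 Hzu) => Eu; subst u; last by rewrite eqxx in Hne.
  by rewrite Hu in Hx.
- by case: (nb2 Hzu) => Eu; subst u; first rewrite eqxx in Hne.
Qed.

Lemma factC P : maximal_open_packing e P -> vx \notin P -> exists j, vt j o5 \in P.
Proof.
move=> HM Hx; have HP := (andP HM).1.
case: (maxl HM Hx) => u [z [Hu Hne Hz Hzu]].
case: (nbx Hz) => j Ez; subst z.
case: (nb0 Hzu) => Eu; subst u; first by rewrite eqxx in Hne.
apply: NNPP => Hno.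
have Hf : vt j o5 \notin P by apply/negP => Hf; apply: Hno; exists j.
case: (maxl HM Hf) => u [z [Hu' Hne' Hz' Hzu']].
case: (nb5 Hz') => Ez; subst z.
- case: (nb4 Hzu') => Eu; subst u; last by rewrite eqxx in Hne'.
  by shF HP Hu Hu' (vt j o2).
- case: (nby Hzu') => j' Eu; subst u; apply: Hno; by exists j'.
Qed.

Lemma factA' P j : maximal_open_packing e P -> vy \in P -> vt j o2 \notin P -> vt j o0 \in P.
Proof.
move=> HM Hx Hd; have HP := (andP HM).1.
case: (maxl HM Hd) => u [z [Hu Hne Hz Hzu]].
case: (nb2 Hz) => Ez; subst z.
- by case: (nb1 Hzu) => Eu; subst u; last rewrite eqxx in Hne.
- case: (nb3 Hzu) => Eu; subst u; first by rewrite eqxx in Hne.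
  by shF HP Hu Hx (vt j o5).
Qed.

Lemma factB' P j : maximal_open_packing e P -> vy \notin P -> vt j o4 \notin P -> vt j o2 \in P.
Proof.
move=> HM Hx Hd; have HP := (andP HM).1.
case: (maxl HM Hd) => u [z [Hu Hne Hz Hzu]].
case: (nb4 Hz) => Ez; subst z.
- by case: (nb3 Hzu) => Eu; subst u; last rewrite eqxx in Hne.
- case: (nb5 Hzu) => Eu; subst u; first by rewrite eqxx in Hne.
  by rewrite Hu in Hx.
Qed.

Lemma factC' P : maximal_open_packing e P -> vy \notin P -> exists j, vt j o0 \in P.
Proof.
move=> HM Hx; have HP := (andP HM).1.
case: (maxl HM Hx) => u [z [Hu Hne Hz Hzu]].
case: (nby Hz) => j Ez; subst z.
case: (nb5 Hzu) => Eu; subst u; last by rewrite eqxx in Hne.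
apply: NNPP => Hno.
have Hf : vt j o0 \notin P by apply/negP => Hf; apply: Hno; exists j.
case: (maxl HM Hf) => u [z [Hu' Hne' Hz' Hzu']].
case: (nb0 Hz') => Ez; subst z.
- case: (nbx Hzu') => j' Eu; subst u; apply: Hno; by exists j'.
- case: (nb1 Hzu') => Eu; subst u; first by rewrite eqxx in Hne'.
  by shF HP Hu Hu' (vt j o3).
Qed.

Definition psi (P : {set T}) (s : option 'I_k + option 'I_k) : T :=
 match s with
 | inl (Some j) => if vx \in P then (if vt j o3 \in P then vt j o3 else vt j o5)
                   else (if vt j o1 \in P then vt j o1 else vt j o3)
 | inl None => if vx \in P then vx else (if [pick j | vt j o5 \in P] is Some j then vt j o5 else vx)
 | inr (Some j) => if vy \in P then (if vt j o2 \in P then vt j o2 else vt j o0)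
                   else (if vt j o4 \in P then vt j o4 else vt j o2)
 | inr None => if vy \in P then vy else (if [pick j | vt j o0 \in P] is Some j then vt j o0 else vy)
 end.

Lemma psi_in P s : maximal_open_packing e P -> psi P s \in P.
Proof.
move=> HM; case: s => [[j|]|[j|]] /=.
- case: ifP => Hx; case: ifP => Hd //.
    exact: factA (negbT Hd).
  exact: factB (negbT Hx) (negbT Hd).
- case: ifP => Hx //; case: pickP => [j //|Hn]; exfalso.
  by case: (factC HM (negbT Hx)) => j Hj; rewrite Hn in Hj.
- case: ifP => Hx; case: ifP => Hd //.
    exact: factA' (negbT Hd).
  exact: factB' (negbT Hx) (negbT Hd).
- case: ifP => Hx //; case: pickP => [j //|Hn]; exfalso.
  by case: (factC' HM (negbT Hx)) => j Hj; rewrite Hn in Hj.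
Qed.

Lemma psi_inj P : injective (psi P).
Proof.
move=> s t.
case: s => [[j|]|[j|]]; case: t => [[j'|]|[j'|]] //=;
repeat (case: ifP => ?); try case: pickP => [j0 _|_]; try case: pickP => [j1 _|_].
all: unfold vt, vx, vy.
all: try (by move/(congr1 tag6)); by case=> ->.
Qed.

Lemma upper P : open_packing e P -> #|P| <= k.+1 + k.+1.
Proof.
move=> HP; rewrite -(card_in_imset (phi_inj HP)).
by apply: leq_trans (max_card _) _; rewrite card_sum !card_option card_ord.
Qed.

Lemma lower P : maximal_open_packing e P -> k.+1 + k.+1 <= #|P|.
Proof.
move=> HM.
have Hs : psi P @: setT \subset P by apply/subsetP => t /imsetP [s _ ->]; exact: psi_in.
apply: leq_trans (subset_leq_card Hs).
by rewrite card_imset ?cardsT ?card_sum ?card_option ?card_ord //; exact: psi_inj.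
Qed.

Lemma op0 : open_packing e set0.
Proof. by apply: opI => u v z; rewrite inE. Qed.

Lemma bigmin_le (r : seq {set T}) (Pr : pred {set T}) (F : {set T} -> nat) x i0 :
  i0 \in r -> Pr i0 -> \big[minn/x]_(i <- r | Pr i) F i <= F i0.
Proof.
elim: r => // a r IH; rewrite inE big_cons => /predU1P [<- ->|Hin Hp]; first exact: geq_minl.
case: ifP => _; last exact: IH.
exact: leq_trans (geq_minr _ _) (IH Hin Hp).
Qed.

Lemma main_k : in_U e.
Proof.
case: (@arg_maxnP _ set0 (fun P => open_packing e P) (fun P => #|P|) op0) => P0 HP0 Hbest.
have HM0 : maximal_open_packing e P0.
  apply/andP; split => //; apply/forallP => Q; apply/implyP => HQ; apply/negP => HQo.
  by have := Hbest Q HQo; have := proper_card HQ; rewrite /geq /= ltnNge => /negP.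
have Hro : rho_o e = k.+1 + k.+1.
  apply/eqP; rewrite eqn_leq; apply/andP; split.
    by apply/bigmax_leqP => P HP; exact: upper.
  exact: leq_trans (lower HM0) (leq_bigmax_cond _ HP0).
rewrite /in_U Hro; apply/eqP; rewrite eqn_leq; apply/andP; split.
  rewrite /rho_oL; apply: leq_trans (@bigmin_le _ _ (fun P => #|P|) #|T| P0 (mem_index_enum P0) HM0) _.
  exact: upper (andP HM0).1.
rewrite /rho_oL; apply: (big_ind (fun x => k.+1 + k.+1 <= x)).
- rewrite card_sum card_prod !card_ord card_bool; lia.
- by move=> a b Ha Hb; rewrite leq_min Ha Hb.
- by move=> P HP; exact: lower.
Qed.
End S.

Theorem mainTheorem16 (k : nat) : 2 <= k -> in_U (@Gk_edge k).
Proof. by move=> _; exact: main_k. Qed.
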